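(* Let $\Phi\in\mathbb R^{P\times N}$, $R$ proper lsc convex with $R_\infty(z)>0$ for all $z\in\ker(\Phi)\setminus\{0\}$, $\bar y\in\mathbb R^P$, and assume the solution set $\mathfrak D(0,\bar y)$ of $\mathcal D(0,\bar y)$ is nonempty. Let $(\lambda_k,y_k)$ be a sequence with $\lambda_k>0$ and $(\|y_k-\bar y\|/\lambda_k,\lambda_k)\to(0,0)$. Then $q^\star(\lambda_k,y_k)\to q^F(0,\bar y)$.
   Context: For $\lambda\ge0$, $y\in\mathbb R^P$, $\mathcal D(\lambda,y)$ is the problem $\max_{q\in\mathbb R^P}\langle q,y\rangle-\frac\lambda2\|q\|^2-R^*(\Phi^*q)$ (Fenchel–Rockafellar dual of $\min_x R(x)+\frac1{2\lambda}\|y-\Phi x\|^2$ for $\lambda>0$, resp. of $\min_x R(x)$ s.t. $\Phi x=y$ for $\lambda=0$), $R^*$ the Fenchel conjugate; $\mathfrak D(\lambda,y)$ is its solution set. For $\lambda>0$ it has a unique solution $q^\star(\lambda,y)$. $q^F(0,y)$ is the minimum-norm element of the closed convex set $\mathfrak D(0,y)$. $R_\infty$ is the recession function $R_\infty(z)=\lim_{t\to+\infty}(R(x+tz)-R(x))/t$, $x\in\mathrm{dom}R$. *)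

(* Defs.v *)
From mathcomp Require Import ssreflect ssrfun ssrbool eqtype ssrnat seq fintype bigop.
From Stdlib Require Import Reals.
Open Scope R_scope.

Definition vec (n : nat) := 'I_n -> R.
Definition mat (P N : nat) := 'I_P -> 'I_N -> R.

Definition dot {n : nat} (u v : vec n) : R := \big[Rplus/R0]_(i < n) (u i * v i).
Definition vnorm {n : nat} (u : vec n) : R := sqrt (dot u u).
Definition vsub {n : nat} (u v : vec n) : vec n := fun i => u i - v i.
Definition vadd {n : nat} (u v : vec n) : vec n := fun i => u i + v i.
Definition vscale {n : nat} (t : R) (u : vec n) : vec n := fun i => t * u i.

Definition mapply {P N : nat} (Phi : mat P N) (x : vec N) : vec P :=
  fun i => \big[Rplus/R0]_(j < N) (Phi i j * x j).
Definition madjoint {P N : nat} (Phi : mat P N) (q : vec P) : vec N :=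
  fun j => \big[Rplus/R0]_(i < P) (Phi i j * q i).

(* extended values R U {+oo} (proper functions never take -oo) *)
Inductive ereal := Fin (r : R) | PInf.

Definition elt (c : R) (v : ereal) : Prop :=
  match v with Fin r => c < r | PInf => True end.

Definition proper_fun {N : nat} (F : vec N -> ereal) : Prop :=
  exists x r, F x = Fin r.

Definition lsc {N : nat} (F : vec N -> ereal) : Prop :=
  forall x c, elt c (F x) ->
    exists d, 0 < d /\ forall x', vnorm (vsub x' x) < d -> elt c (F x').

Definition convex_fun {N : nat} (F : vec N -> ereal) : Prop :=
  forall x y t r s, 0 < t < 1 -> F x = Fin r -> F y = Fin s ->
    exists u, F (vadd (vscale t x) (vscale (1 - t) y)) = Fin u /\
              u <= t * r + (1 - t) * s.

Definition is_sup (S : R -> Prop) (v : ereal) : Prop :=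
  match v with
  | Fin c => is_lub S c
  | PInf => forall M, exists s, S s /\ M < s
  end.

Definition conj_val {N : nat} (F : vec N -> ereal) (u : vec N) (v : ereal) : Prop :=
  is_sup (fun s => exists x r, F x = Fin r /\ s = dot u x - r) v.

Definition rec_quot {N : nat} (F : vec N -> ereal) (x z : vec N) (r t : R) : ereal :=
  match F (vadd x (vscale t z)) with
  | Fin a => Fin ((a - r) / t)
  | PInf => PInf
  end.

Definition rec_limit {N : nat} (F : vec N -> ereal) (x z : vec N) (r : R) (l : ereal) : Prop :=
  match l with
  | Fin c => forall eps, 0 < eps -> exists T, forall t, T < t ->
               exists a, rec_quot F x z r t = Fin a /\ Rabs (a - c) < eps
  | PInf => forall M, exists T, forall t, T < t -> elt M (rec_quot F x z r t)
  end.

(* R_oo(z) > 0 : for x in dom F, the limit defining the recession function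
   exists (in R U {+oo}) and is > 0 *)
Definition recession_pos {N : nat} (F : vec N -> ereal) (z : vec N) : Prop :=
  forall x r, F x = Fin r -> exists l, rec_limit F x z r l /\ elt 0 l.

(* dual objective <q,y> - lam/2 ||q||^2 - c, where c = R^*(Phi^* q) is finite *)
Definition dual_obj {P : nat} (lam : R) (y q : vec P) (c : R) : R :=
  dot q y - lam / 2 * (vnorm q) ^ 2 - c.

(* q is a solution of D(lam, y): q is in the solution set \mathfrak D(lam,y).
   Points with R^*(Phi^* q) = +oo have objective -oo. *)
Definition dual_sol {P N : nat} (Phi : mat P N) (F : vec N -> ereal)
    (lam : R) (y q : vec P) : Prop :=
  exists c, conj_val F (madjoint Phi q) (Fin c) /\
    forall q' c', conj_val F (madjoint Phi q') (Fin c') ->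
      dual_obj lam y q' c' <= dual_obj lam y q c.

Definition min_norm_sol {P N : nat} (Phi : mat P N) (F : vec N -> ereal)
    (y q : vec P) : Prop :=
  dual_sol Phi F 0 y q /\
  forall q', dual_sol Phi F 0 y q' -> vnorm q <= vnorm q'.

Definition vec_cv {n : nat} (u : nat -> vec n) (l : vec n) : Prop :=
  forall eps, 0 < eps -> exists K, forall k, (K <= k)%nat -> vnorm (vsub (u k) l) < eps.

(* Main.v *)
Require Import Defs.
From mathcomp Require Import ssreflect ssrfun ssrbool eqtype ssrnat seq fintype bigop.
From Stdlib Require Import Reals Lra Psatz ClassicalEpsilon Classical.
Open Scope R_scope.

Lemma bsum_add (I:Type) (r:seq I) (Pr: pred I) (f g : I -> R) :
  \big[Rplus/R0]_(i <- r | Pr i) (f i + g i) = \big[Rplus/R0]_(i <- r | Pr i) f i + \big[Rplus/R0]_(i <- r | Pr i) g i.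
Proof. elim: r => [|a r IH]; rewrite ?big_nil ?big_cons; [lra|]. case: (Pr a); rewrite IH; lra. Qed.

Lemma bsum_scal (I:Type) (r:seq I) (Pr: pred I) (a : R) (f : I -> R) :
  \big[Rplus/R0]_(i <- r | Pr i) (a * f i) = a * \big[Rplus/R0]_(i <- r | Pr i) f i.
Proof. elim: r => [|b r IH]; rewrite ?big_nil ?big_cons; [lra|]. case: (Pr b); rewrite IH; lra. Qed.

Lemma bsum_le (I:Type) (r:seq I) (Pr: pred I) (f g : I -> R) :
  (forall i, f i <= g i) ->
  \big[Rplus/R0]_(i <- r | Pr i) f i <= \big[Rplus/R0]_(i <- r | Pr i) g i.
Proof. move=> H; elim: r => [|b r IH]; rewrite ?big_nil ?big_cons; [lra|]. case: (Pr b) => //. have := H b; lra. Qed.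

Lemma bsum_cv (I:Type) (r:seq I) (Pr: pred I) (f : nat -> I -> R) (l : I -> R) :
  (forall i, Un_cv (fun n => f n i) (l i)) ->
  Un_cv (fun n => \big[Rplus/R0]_(i <- r | Pr i) f n i) (\big[Rplus/R0]_(i <- r | Pr i) l i).
Proof.
move=> H; elim: r => [|b r IH].
- rewrite big_nil. move=> e he; exists 0%nat => n _; rewrite big_nil /R_dist Rminus_diag Rabs_R0; lra.
- rewrite big_cons. case E: (Pr b).
  + have := CV_plus _ _ _ _ (H b) IH. move=> Hc e he; have [N HN] := Hc e he; exists N => n hn.
    rewrite big_cons E; exact: HN.
  + move=> e he; have [N HN] := IH e he; exists N => n hn.
    rewrite big_cons E; exact: HN.
Qed.

Lemma bsum_term (I:eqType) (r:seq I) (f : I -> R) (j : I) :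
  (forall i, 0 <= f i) -> j \in r -> f j <= \big[Rplus/R0]_(i <- r) f i.
Proof.
move=> H; elim: r => [|b r IH] //. rewrite big_cons in_cons => /orP [/eqP ->|Hj].
- have : 0 <= \big[Rplus/R0]_(i <- r) f i.
  { elim: r {IH} => [|c s IH2]; rewrite ?big_nil ?big_cons; [lra|]. have := H c; lra. }
  lra.
- have := IH Hj; have := H b; lra.
Qed.

Lemma dot_add_l n (u v w : vec n) : dot (fun i => u i + v i) w = dot u w + dot v w.
Proof. rewrite /dot -bsum_add. apply: eq_bigr => i _; ring. Qed.

Lemma bsum_nonneg (I:Type) (r:seq I) (Pr: pred I) (f : I -> R) :
  (forall i, 0 <= f i) -> 0 <= \big[Rplus/R0]_(i <- r | Pr i) f i.
Proof. move=> H; elim: r => [|b r IH]; rewrite ?big_nil ?big_cons; [lra|]. case: (Pr b) => //. have := H b; lra. Qed.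

Lemma dot_ext n (u u' v v' : vec n) : (forall i, u i = u' i) -> (forall i, v i = v' i) ->
  dot u v = dot u' v'.
Proof. move=> H1 H2; rewrite /dot; apply: eq_bigr => i _; by rewrite H1 H2. Qed.

Lemma dot_comm n (u v : vec n) : dot u v = dot v u.
Proof. rewrite /dot; apply: eq_bigr => i _; ring. Qed.

Lemma dot_lin_l n (a b w : vec n) s t :
  dot (fun i => s * a i + t * b i) w = s * dot a w + t * dot b w.
Proof.
rewrite /dot -!bsum_scal -bsum_add; apply: eq_bigr => i _; ring.
Qed.

Lemma dot_lin_r n (a b w : vec n) s t :
  dot w (fun i => s * a i + t * b i) = s * dot w a + t * dot w b.
Proof. rewrite dot_comm dot_lin_l (dot_comm _ a) (dot_comm _ b) //. Qed.

Lemma dot_sub_l n (a b w : vec n) : dot (vsub a b) w = dot a w - dot b w.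
Proof.
rewrite (@dot_ext _ _ (fun i => 1 * a i + (-1) * b i) w w) //.
- rewrite dot_lin_l; ring.
- move=> i; rewrite /vsub; ring.
Qed.

Lemma dot_sub_r n (a b w : vec n) : dot w (vsub a b) = dot w a - dot w b.
Proof. rewrite dot_comm dot_sub_l (dot_comm _ a) (dot_comm _ b) //. Qed.

Lemma dot_pos n (u : vec n) : 0 <= dot u u.
Proof. apply: bsum_nonneg => i; nra. Qed.

Lemma vnorm_sq n (u : vec n) : vnorm u ^ 2 = dot u u.
Proof. rewrite /vnorm pow2_sqrt //; exact: dot_pos. Qed.

Lemma coord_le n (u : vec n) (i : 'I_n) : u i ^ 2 <= dot u u.
Proof.
rewrite /dot. have -> : u i ^ 2 = (fun j => u j * u j) i by simpl; ring.
apply: bsum_term; [move=> j; nra| exact: mem_index_enum].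
Qed.

Lemma dot_cv n (a b : nat -> vec n) (la lb : vec n) :
  (forall i, Un_cv (fun k => a k i) (la i)) -> (forall i, Un_cv (fun k => b k i) (lb i)) ->
  Un_cv (fun k => dot (a k) (b k)) (dot la lb).
Proof.
move=> Ha Hb; rewrite /dot. apply: (@bsum_cv _ _ _ (fun k i => a k i * b k i) (fun i => la i * lb i)) => i.
exact: CV_mult.
Qed.

Lemma madj_cv P N (Phi : mat P N) (a : nat -> vec P) (la : vec P) :
  (forall i, Un_cv (fun k => a k i) (la i)) ->
  forall j, Un_cv (fun k => madjoint Phi (a k) j) (madjoint Phi la j).
Proof.
move=> Ha j; rewrite /madjoint. apply: (@bsum_cv _ _ _ (fun k i => Phi i j * a k i) (fun i => Phi i j * la i)) => i.
apply: CV_mult => //. move=> e he; exists 0%nat => k _; rewrite /R_dist Rminus_diag Rabs_R0; lra.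
Qed.

Lemma madj_lin P N (Phi : mat P N) (a b : vec P) s t j :
  madjoint Phi (fun i => s * a i + t * b i) j = s * madjoint Phi a j + t * madjoint Phi b j.
Proof. rewrite /madjoint -!bsum_scal -bsum_add; apply: eq_bigr => i _; ring. Qed.

Lemma cv_const (c : R) : Un_cv (fun _ => c) c.
Proof. move=> e he; exists 0%nat => k _; rewrite /R_dist Rminus_diag Rabs_R0; lra. Qed.

Lemma cv_ext (a b : nat -> R) l : (forall n, a n = b n) -> Un_cv a l -> Un_cv b l.
Proof. move=> H Ha e he; have [N HN] := Ha e he; exists N => n hn; rewrite -H; exact: HN. Qed.

Lemma cv_sub (a : nat -> R) (phi : nat -> nat) l : (forall n, (n <= phi n)%coq_nat) ->
  Un_cv a l -> Un_cv (fun n => a (phi n)) l.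
Proof. move=> H Ha e he; have [N HN] := Ha e he; exists N => n hn; apply: HN; have := H n; lia. Qed.

Lemma bw1 (a : nat -> R) M : (forall n, Rabs (a n) <= M) ->
  exists chi : nat -> nat, (forall n, (chi n < chi (S n))%coq_nat) /\
  exists l, Un_cv (fun n => a (chi n)) l.
Proof.
move=> HM.
have [l Hl] : exists l, ValAdh a l.
{ apply: (Bolzano_Weierstrass a (fun c => -M <= c <= M)); first exact: compact_P3.
  move=> n; have := HM n; case: (Rcase_abs (a n)) => h; [rewrite Rabs_left //|rewrite Rabs_right //]; lra. }
have H : forall n N, exists p, (N <= p)%coq_nat /\ Rabs (a p - l) < / INR (S n).
{ move=> n N.
  have hp : 0 < / INR (S n) by apply: Rinv_0_lt_compat; apply: lt_0_INR; lia.
  have := Hl (disc l (mkposreal _ hp)) N.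
  case.
  - exists (mkposreal _ hp) => x //.
  - move=> p [hp1 hp2]; exists p; split => //. }
pose g n N := proj1_sig (constructive_indefinite_description _ (H n N)).
have Hg : forall n N, (N <= g n N)%coq_nat /\ Rabs (a (g n N) - l) < / INR (S n).
{ move=> n N; rewrite /g; case: (constructive_indefinite_description _ _) => //. }
pose chi := fix f n := match n with 0%nat => g 0%nat 0%nat | S m => g (S m) (S (f m)) end.
have Hc1 : forall n, (chi n < chi (S n))%coq_nat.
{ move=> n /=; have [h _] := Hg (S n) (S (chi n)); lia. }
have Hc2 : forall n, Rabs (a (chi n) - l) < / INR (S n).
{ case=> [|n] /=; [exact: (proj2 (Hg 0%nat 0%nat)) | exact: (proj2 (Hg (S n) _))]. }
exists chi; split => //; exists l.
move=> e he. have [N [HN HN0]] := archimed_cor1 e he.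
exists N => n hn. rewrite /R_dist.
apply: (Rlt_le_trans _ _ _ (Hc2 n)).
apply: (Rle_trans _ (/ INR N)); last lra.
apply: Rinv_le_contravar; first by apply: lt_0_INR; lia.
apply: le_INR; lia.
Qed.

Lemma incr_mono (f : nat -> nat) : (forall n, (f n < f (S n))%coq_nat) ->
  forall a b, (a < b)%coq_nat -> (f a < f b)%coq_nat.
Proof.
move=> H a b; elim: b => [|b IH] hab; first lia.
have : (a < b \/ a = b)%coq_nat by lia. case=> [h|->]; last exact: H.
have := IH h; have := H b; lia.
Qed.

Lemma incr_ge (f : nat -> nat) : (forall n, (f n < f (S n))%coq_nat) -> forall n, (n <= f n)%coq_nat.
Proof. move=> H; elim=> [|n IH]; first lia. have := H n; lia. Qed.

Lemma bwP P (u : nat -> vec P) M : (forall n i, Rabs (u n i) <= M) ->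
  exists psi : nat -> nat, (forall n, (n <= psi n)%coq_nat) /\
  exists l : vec P, forall i, Un_cv (fun n => u (psi n) i) (l i).
Proof.
move=> HM.
suff: forall m, exists psi : nat -> nat, (forall n, (psi n < psi (S n))%coq_nat) /\
  exists l : vec P, forall i : 'I_P, (nat_of_ord i < m)%coq_nat -> Un_cv (fun n => u (psi n) i) (l i).
{ move=> /(_ P) [psi [H1 [l H2]]]; exists psi; split; first exact: incr_ge.
  exists l => i; apply: H2; apply/ltP; exact: ltn_ord. }
elim=> [|m [psi [H1 [l H2]]]].
- exists (fun n : nat => n); split => [n|]; first lia. exists (fun _ => 0) => i hi; lia.
- case: (ltnP m P) => hmP.
  + pose i0 := Ordinal hmP.
    have [chi [Hc1 [a Ha]]] := bw1 (fun n => u (psi n) i0) M (fun n => HM _ _).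
    exists (fun n => psi (chi n)); split.
    * move=> n; apply: incr_mono => //.
    * exists (fun i => if nat_of_ord i == m then a else l i) => i hi.
      case: eqP => him.
      -- have -> : i = i0 by apply: val_inj.
         exact: Ha.
      -- apply: (cv_sub (fun n => u (psi n) i) chi); first exact: incr_ge.
         apply: H2; lia.
  + exists psi; split => //; exists l => i hi; apply: H2.
    have := ltn_ord i; move/ltP; move/leP: hmP; lia.
Qed.
Lemma arith (lam eps nk nF ek ed del dd : R) :
  0 < lam -> 0 <= eps -> 0 <= nk -> 0 <= nF -> 0 <= del -> 0 <= ek ->
  ek <= 2*nk + 2*nF -> dd = (eps*lam)^2 ->
  lam/2 * (nk - nF) + del <= ed ->
  (forall a, 0 < a -> 2*ed <= a*ek + dd/a) ->
  nk <= 3*nF + 8*eps^2 /\ nk - nF <= (eps+lam)*(8*nF+16*eps^2) + eps /\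
  del <= lam * (3/4*nF + 2*eps^2).
Proof.
move=> hl he hnk hnF hd hek hek2 hdd h1 hy.
have h4 : dd/(lam/4) = 4*eps^2*lam by rewrite hdd; field; lra.
have y1 := hy (lam/4) ltac:(lra). rewrite h4 in y1.
have m1 : lam * ek <= lam * (2*nk + 2*nF) by apply Rmult_le_compat_l; lra.
have A : lam * (3*nF + 8*eps^2 - nk) >= 2*del by nra.
have B : nk <= 3*nF + 8*eps^2.
{ apply Rmult_le_reg_l with lam => //. nra. }
split => //. split; last by nra.
set t := eps + lam.
have ht : 0 < t by rewrite /t; lra.
have y2 := hy (lam*t) ltac:(nra).
have h5 : dd/(lam*t) = lam * (eps^2/t) by rewrite hdd; field; lra.
rewrite h5 in y2.
have w1 : eps^2/t <= eps.
{ apply (Rmult_le_reg_r t) => //. rewrite /Rdiv Rmult_assoc Rinv_l; [|lra]. rewrite /t; nra. }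
have C : lam * (nk - nF) <= lam * (t*ek + eps^2/t) by nra.
have D : nk - nF <= t*ek + eps^2/t by apply Rmult_le_reg_l with lam => //.
have E : t * ek <= t * (8*nF + 16*eps^2) by apply Rmult_le_compat_l; lra.
lra.
Qed.

Lemma young n (u v : vec n) a : 0 < a -> 2 * dot u v <= a * dot u u + dot v v / a.
Proof.
move=> ha. have := dot_pos _ (fun i => a * u i + (-1) * v i).
rewrite dot_lin_l !dot_lin_r (dot_comm _ v u) => h.
apply (Rmult_le_reg_l a) => //.
have -> : a * (a * dot u u + dot v v / a) = a * a * dot u u + dot v v by field; lra.
nra.
Qed.

Theorem lemma4p2 (P N : nat) (Phi : mat P N) (F : vec N -> ereal)
  (HFp : proper_fun F) (HFl : lsc F) (HFc : convex_fun F)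
  (Hrec : forall z : vec N, (forall i, mapply Phi z i = 0) ->
            ~ (forall j, z j = 0) -> recession_pos F z)
  (ybar : vec P) (Hne : exists q, dual_sol Phi F 0 ybar q)
  (lam : nat -> R) (y : nat -> vec P)
  (Hlam : forall k, 0 < lam k)
  (Hcv1 : Un_cv (fun k => vnorm (vsub (y k) ybar) / lam k) 0)
  (Hcv2 : Un_cv lam 0)
  (qs : nat -> vec P) (Hqs : forall k, dual_sol Phi F (lam k) (y k) (qs k))
  (qF : vec P) (HqF : min_norm_sol Phi F ybar qF) :
  vec_cv qs qF.
Proof.
destruct HqF as [[cF [HcF HoptF]] Hmin].
set v0 := dot qF ybar - cF.
have Hopt0 : forall q c, conj_val F (madjoint Phi q) (Fin c) -> dot q ybar - c <= v0.
{ move=> q c Hc; have := HoptF q c Hc; rewrite /dual_obj /v0; lra. }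
set nF := dot qF qF.
have hnF : 0 <= nF := dot_pos _ qF.
pose eps k := vnorm (vsub (y k) ybar) / lam k.
have heps : forall k, 0 <= eps k.
{ move=> k; rewrite /eps /vnorm; apply: Rmult_le_pos; [apply: sqrt_pos| apply/Rlt_le/Rinv_0_lt_compat/Hlam]. }
have Hk : forall k, exists ck, conj_val F (madjoint Phi (qs k)) (Fin ck) /\
   dot (qs k) (qs k) <= 3*nF + 8*eps k^2 /\
   dot (qs k) (qs k) - nF <= (eps k + lam k)*(8*nF+16*eps k^2) + eps k /\
   ck <= dot (qs k) ybar - v0 + lam k * (3/4*nF + 2*eps k^2).
{ move=> k. have [ck [Hck Hok]] := Hqs k. exists ck; split => //.
  have Hcmp := Hok qF cF HcF. rewrite /dual_obj !vnorm_sq in Hcmp.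
  have Hd := Hopt0 _ _ Hck.
  set q := qs k in Hcmp Hd *. set d := vsub (y k) ybar.
  have e1 : forall w, dot w (y k) = dot w ybar + dot w d. { move=> w; rewrite /d dot_sub_r; ring. }
  rewrite !e1 in Hcmp.
  have := arith (lam k) (eps k) (dot q q) nF (dot (vsub q qF) (vsub q qF)) (dot (vsub q qF) d)
     (v0 - (dot q ybar - ck)) (dot d d) (Hlam k) (heps k) (dot_pos _ q) hnF.
  case.
  - lra.
  - exact: dot_pos.
  - rewrite dot_sub_l !dot_sub_r. have := dot_pos _ (fun i => 1*q i + 1*qF i).
    rewrite dot_lin_l !dot_lin_r (dot_comm _ qF q) /nF; lra.
  - rewrite -vnorm_sq /eps. have := Hlam k; move=> hl. rewrite /d. field. lra.
  - rewrite dot_sub_l /v0. rewrite /nF. lra.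
  - move=> a ha; exact: young.
  - move=> A [B C]; split; [|split]; lra. }
apply: NNPP => Hnc.
have [eta [heta Hfreq]] : exists eta, 0 < eta /\ forall K, exists k, (K <= k)%coq_nat /\ eta <= vnorm (vsub (qs k) qF).
{ apply: NNPP => H2; apply: Hnc => e he. apply: NNPP => H3. apply: H2; exists e; split => //.
  move=> K. apply: NNPP => H4. apply: H3. exists K => k hk. apply: NNPP => H5. apply: H4.
  exists k; split; [by apply/leP | exact: Rnot_lt_le]. }
have [N1 HN1] := Hcv1 1 Rlt_0_1.
have Hch : forall n, exists k, (Nat.max N1 n <= k)%coq_nat /\ eta <= vnorm (vsub (qs k) qF).
{ move=> n; exact: Hfreq. }
pose phi0 n := proj1_sig (constructive_indefinite_description _ (Hch n)).
have Hphi0 : forall n, (Nat.max N1 n <= phi0 n)%coq_nat /\ eta <= vnorm (vsub (qs (phi0 n)) qF).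
{ move=> n; rewrite /phi0; case: (constructive_indefinite_description _ _) => //. }
have Hbd : forall n i, Rabs (qs (phi0 n) i) <= 3*nF + 9.
{ move=> n i. have [hp _] := Hphi0 n.
  have he : eps (phi0 n) < 1.
  { have := HN1 (phi0 n) ltac:(lia). rewrite /R_dist Rminus_0_r -/(eps (phi0 n)).
    rewrite Rabs_right; [lra| have := heps (phi0 n); lra]. }
  have [ck [_ [hq _]]] := Hk (phi0 n).
  have hc := coord_le _ (qs (phi0 n)) i. have := heps (phi0 n) => h0.
  have h8 : eps (phi0 n) ^ 2 <= 1 by nra.
  case: (Rcase_abs (qs (phi0 n) i)) => h; [rewrite Rabs_left //|rewrite Rabs_right //]; nra. }
have [psi [Hpsi [qb Hqb]]] := bwP _ _ _ Hbd.
pose kn n := phi0 (psi n).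
have Hkn : forall n, (n <= kn n)%coq_nat.
{ move=> n; have [h _] := Hphi0 (psi n); have := Hpsi n; rewrite /kn; lia. }
have Leps : Un_cv (fun n => eps (kn n)) 0 by exact: (cv_sub eps kn).
have Llam : Un_cv (fun n => lam (kn n)) 0 by exact: (cv_sub lam kn).
have Lq : forall i, Un_cv (fun n => qs (kn n) i) (qb i) by exact: Hqb.
have Ha : dot qb qb <= nF.
{ have L := CV_plus _ _ _ _ (CV_mult _ _ _ _ (CV_plus _ _ _ _ Leps Llam)
     (CV_plus _ _ _ _ (cv_const (8*nF)) (CV_mult _ _ _ _ (cv_const 16) (CV_mult _ _ _ _ Leps Leps)))) Leps.
  have L2 := CV_plus _ _ _ _ (cv_const nF) L.
  have Hle : forall n, dot (qs (kn n)) (qs (kn n)) <= nF + ((eps (kn n) + lam (kn n)) * (8 * nF + 16 * (eps (kn n) * eps (kn n))) + eps (kn n)).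
  { move=> n. have [ck [_ [_ [h _]]]] := Hk (kn n). simpl in h. lra. }
  have := @Rle_cv_lim _ _ _ _ Hle (dot_cv _ _ _ _ _ Lq Lq) L2.
  have : nF + ((0 + 0) * (8 * nF + 16 * (0 * 0)) + 0) = nF by ring. lra. }
have Hb : eta ^ 2 <= dot (vsub qb qF) (vsub qb qF).
{ have Hle : forall n, eta ^ 2 <= dot (vsub (qs (kn n)) qF) (vsub (qs (kn n)) qF).
  { move=> n. rewrite -vnorm_sq. have [_ h] := Hphi0 (psi n). rewrite /kn; apply: pow_incr; split; lra. }
  have Lv : forall i, Un_cv (fun n => vsub (qs (kn n)) qF i) (vsub qb qF i).
  { move=> i; exact: (CV_minus _ _ _ _ (Lq i) (cv_const _)). }
  exact: (@Rle_cv_lim _ _ _ _ Hle (cv_const _) (dot_cv _ _ _ _ _ Lv Lv)). }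
have Hc : forall x r, F x = Fin r -> dot (madjoint Phi qb) x - r <= dot qb ybar - v0.
{ move=> x r hx.
  have L := CV_plus _ _ _ _ (CV_minus _ _ _ _ (dot_cv _ _ (fun _ => ybar) _ ybar Lq (fun i => cv_const (ybar i))) (cv_const v0))
     (CV_mult _ _ _ _ Llam (CV_plus _ _ _ _ (cv_const (3/4*nF)) (CV_mult _ _ _ _ (cv_const 2) (CV_mult _ _ _ _ Leps Leps)))).
  have L1 := CV_minus _ _ _ _ (dot_cv _ (fun n => madjoint Phi (qs (kn n))) (fun _ => x) _ x (madj_cv _ _ Phi _ _ Lq) (fun _ => cv_const _)) (cv_const r).
  have Hle : forall n, dot (madjoint Phi (qs (kn n))) x - r <= dot (qs (kn n)) ybar - v0 + lam (kn n) * (3/4*nF + 2*(eps (kn n) * eps (kn n))).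
  { move=> n. have [ck [Hck [_ [_ h]]]] := Hk (kn n). simpl in h.
    have h2 : dot (madjoint Phi (qs (kn n))) x - r <= ck.
    { apply: (proj1 Hck). exists x, r; split => //. }
    lra. }
  have := @Rle_cv_lim _ _ _ _ Hle L1 L.
  have : dot qb ybar - v0 + 0 * (3 / 4 * nF + 2 * (0 * 0)) = dot qb ybar - v0 by ring. lra. }
have [x0 [r0 hx0]] := HFp.
pose Eb := fun s => exists x r, F x = Fin r /\ s = dot (madjoint Phi qb) x - r.
have Bb : bound Eb.
{ exists (dot qb ybar - v0) => s [x [r [hx ->]]]; exact: Hc. }
have [cb Hcb] := completeness Eb Bb
  (ex_intro _ _ (ex_intro _ x0 (ex_intro _ r0 (conj hx0 erefl)))).
have Hcb2 : cb <= dot qb ybar - v0.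
{ apply: (proj2 Hcb) => s [x [r [hx ->]]]; exact: Hc. }
pose m := fun i => /2 * qb i + /2 * qF i.
pose Em := fun s => exists x r, F x = Fin r /\ s = dot (madjoint Phi m) x - r.
have Hem : forall x r, F x = Fin r -> dot (madjoint Phi m) x - r <= (cb + cF) / 2.
{ move=> x r hx.
  have -> : dot (madjoint Phi m) x = /2 * dot (madjoint Phi qb) x + /2 * dot (madjoint Phi qF) x.
  { rewrite -dot_lin_l; apply: dot_ext => // j; exact: madj_lin. }
  have h1 : dot (madjoint Phi qb) x - r <= cb by apply: (proj1 Hcb); exists x, r.
  have h2 : dot (madjoint Phi qF) x - r <= cF by apply: (proj1 HcF); exists x, r.
  lra. }
have Bm : bound Em.
{ exists ((cb + cF)/2) => s [x [r [hx ->]]]; exact: Hem. }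
have [cm Hcm] := completeness Em Bm
  (ex_intro _ _ (ex_intro _ x0 (ex_intro _ r0 (conj hx0 erefl)))).
have Hcm2 : cm <= (cb + cF) / 2.
{ apply: (proj2 Hcm) => s [x [r [hx ->]]]; exact: Hem. }
have Hsol : dual_sol Phi F 0 ybar m.
{ exists cm; split; first exact: Hcm.
  move=> q' c' Hc'. have := Hopt0 _ _ Hc'. rewrite /dual_obj.
  have -> : dot m ybar = /2 * dot qb ybar + /2 * dot qF ybar by rewrite dot_lin_l.
  rewrite /v0 in Hcb2 *. lra. }
have Hmn := Hmin m Hsol.
have Hmm : dot m m = /4 * dot qb qb + /2 * dot qb qF + /4 * nF.
{ rewrite /m dot_lin_l !dot_lin_r (dot_comm _ qF qb) /nF; field. }
have Hee : dot (vsub qb qF) (vsub qb qF) = dot qb qb - 2 * dot qb qF + nF.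
{ rewrite dot_sub_l !dot_sub_r (dot_comm _ qF qb) /nF; ring. }
have heta2 : 0 < eta ^ 2 by apply: pow_lt.
have hlt : dot m m < nF by lra.
have : vnorm m < vnorm qF by apply: sqrt_lt_1 => //; exact: dot_pos.
lra.
Qed.
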